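(* Let $\mathcal F_2$ be the set of the following five graphs: the path $P_4$; $K_5\setminus S_2$ (the complete graph on 5 vertices with the two edges of a path $uvw$ removed); $K_6\setminus M_2$ (the complete graph on 6 vertices with two disjoint edges removed); the graph on vertices $1,\dots,5$ with edges $23,24,34,14,45$ (a triangle with two pendant vertices attached to the same triangle vertex); and the graph on vertices $1,\dots,5$ with edges $12,14,23,24,34,45$ (the diamond $K_4$ minus edge $13$ with a pendant vertex attached to the degree-3 vertex $4$). A simple connected graph $G$ is $\mathcal F_2$-free (no induced subgraph of $G$ is isomorphic to a member of $\mathcal F_2$) if and only if $G$ is an induced subgraph of $K_{m,n,o}$ or of $T_n\vee(K_m+K_o)$ for some non-negative integers $m,n,o$.
   Context: $K_{m,n,o}$ is the complete tripartite graph with parts of sizes $m,n,o$; $T_n$ is the edgeless graph on $n$ vertices; $K_m$ the complete graph on $m$ vertices; $G+H$ is the disjoint union and $G\vee H$ the join (disjoint union plus all edges between $G$ and $H$). *)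

(* Defs.v *)
(* simple graphs as symmetric irreflexive boolean relations on finTypes. *)
From mathcomp Require Import all_boot.
Set Implicit Arguments. Unset Strict Implicit. Unset Printing Implicit Defensive.

Definition induced_sub (T1 : finType) (e1 : rel T1) (T2 : finType) (e2 : rel T2) : Prop :=
  exists f : T1 -> T2, injective f /\ forall x y, e2 (f x) (f y) = e1 x y.

Definition connected_graph (T : finType) (e : rel T) : Prop :=
  forall x y : T, connect e x y.

Definition in_edges (s : seq (nat * nat)) (i j : nat) : bool :=
  ((i, j) \in s) || ((j, i) \in s).

Definition P4 : rel 'I_4 := fun i j => in_edges [:: (0,1); (1,2); (2,3)] i j.
Definition K5_minus_S2 : rel 'I_5 :=
  fun i j => (i != j) && ~~ in_edges [:: (0,1); (1,2)] i j.
Definition K6_minus_M2 : rel 'I_6 :=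
  fun i j => (i != j) && ~~ in_edges [:: (0,1); (2,3)] i j.
(* vertices 1..5 relabelled 0..4: edges 23,24,34,14,45 *)
Definition F2_4 : rel 'I_5 :=
  fun i j => in_edges [:: (1,2); (1,3); (2,3); (0,3); (3,4)] i j.
(* vertices 1..5 relabelled 0..4: edges 12,14,23,24,34,45 *)
Definition F2_5 : rel 'I_5 :=
  fun i j => in_edges [:: (0,1); (0,3); (1,2); (1,3); (2,3); (3,4)] i j.

Definition F2_free (T : finType) (e : rel T) : Prop :=
  ~ induced_sub P4 e /\ ~ induced_sub K5_minus_S2 e /\ ~ induced_sub K6_minus_M2 e /\
  ~ induced_sub F2_4 e /\ ~ induced_sub F2_5 e.

Definition part3 (A B C : Type) (x : A + (B + C)) : nat :=
  match x with inl _ => 0 | inr (inl _) => 1 | inr (inr _) => 2 end.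

Definition Kmno (m n o : nat) : rel ('I_m + ('I_n + 'I_o))%type :=
  fun x y => part3 x != part3 y.

(* T_n \/ (K_m + K_o): part 0 is the independent set T_n, parts 1,2 are cliques K_m, K_o *)
Definition Tjoin (n m o : nat) : rel ('I_n + ('I_m + 'I_o))%type :=
  fun x y => (x != y) &&
    (if (part3 x == 0) || (part3 y == 0) then part3 x != part3 y
     else part3 x == part3 y).
Arguments Kmno : clear implicits.
Arguments Tjoin : clear implicits.

(* Main.v *)
Require Import Defs.
From mathcomp Require Import all_boot.
Set Implicit Arguments. Unset Strict Implicit. Unset Printing Implicit Defensive.

Definition Kn k (F : nat -> nat -> bool) (q : nat -> nat) :=
  all (fun i => all (fun j => F i j == (q i != q j)) (iota 0 k)) (iota 0 k).
Definition Tn k (F : nat -> nat -> bool) (q : nat -> nat) :=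
  all (fun i => all (fun j => F i j == (i != j) &&
     (if (q i == 0) || (q j == 0) then q i != q j else q i == q j)) (iota 0 k)) (iota 0 k).
Definition KTn k F q := Kn k F q || Tn k F q.

Lemma KTn_ext k F q1 q2 : {in gtn k, q1 =1 q2} -> KTn k F q1 = KTn k F q2.
Proof.
move=> h; rewrite /KTn /Kn /Tn.
congr (_ || _); apply: eq_in_all => i; rewrite mem_iota add0n => /h hi;
  apply: eq_in_all => j; rewrite mem_iota add0n => /h hj; by rewrite hi hj.
Qed.

Lemma part3_lt (A B C : Type) (x : A + (B + C)) : part3 x < 3.
Proof. by case: x => [?|[?|?]]. Qed.

Lemma bridge k (F : rel 'I_k.+1) (Fn : nat -> nat -> bool) :
  (forall i j : 'I_k.+1, F i j = Fn i j) ->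
  (forall q, (forall i, q i < 3) -> ~~ KTn k.+1 Fn q) ->
  forall (T : finType) (e : rel T) m n o,
  induced_sub e (Kmno m n o) \/ induced_sub e (Tjoin n m o) -> ~ induced_sub F e.
Proof.
move=> hF H T e m n o Hs [g [ginj gE]].
case: Hs => [[f [finj fE]] | [f [finj fE]]];
  have := H (fun i => part3 (f (g (inord i)))) (fun i => part3_lt _); rewrite /KTn.
  suff -> : Kn k.+1 Fn (fun i => part3 (f (g (inord i)))) by [].
  apply/allP => i; rewrite mem_iota add0n => hi; apply/allP => j; rewrite mem_iota add0n => hj.
  have := hF (inord i) (inord j); rewrite !inordK // => <-.
  by rewrite -gE -fE /Kmno.
suff -> : Tn k.+1 Fn (fun i => part3 (f (g (inord i)))) by rewrite orbT.
apply/allP => i; rewrite mem_iota add0n => hi; apply/allP => j; rewrite mem_iota add0n => hj.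
have := hF (inord i) (inord j); rewrite !inordK // => <-.
rewrite -gE -fE /Tjoin (inj_eq finj) (inj_eq ginj).
by rewrite -(inj_eq val_inj) /= !inordK.
Qed.

Lemma lt3_mem x : x < 3 -> x \in [:: 0; 1; 2].
Proof. by case: x => [|[|[|]]]. Qed.

Definition P4n (i j : nat) := in_edges [:: (0,1); (1,2); (2,3)] i j.
Definition K5n (i j : nat) := (i != j) && ~~ in_edges [:: (0,1); (1,2)] i j.
Definition K6n (i j : nat) := (i != j) && ~~ in_edges [:: (0,1); (2,3)] i j.
Definition F4n (i j : nat) := in_edges [:: (1,2); (1,3); (2,3); (0,3); (3,4)] i j.
Definition F5n (i j : nat) := in_edges [:: (0,1); (0,3); (1,2); (1,3); (2,3); (3,4)] i j.

Lemma hP4n (i j : 'I_4) : P4 i j = P4n i j. Proof. by []. Qed.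
Lemma hK5n (i j : 'I_5) : K5_minus_S2 i j = K5n i j. Proof. by []. Qed.
Lemma hK6n (i j : 'I_6) : K6_minus_M2 i j = K6n i j. Proof. by []. Qed.
Lemma hF4n (i j : 'I_5) : F2_4 i j = F4n i j. Proof. by []. Qed.
Lemma hF5n (i j : 'I_5) : F2_5 i j = F5n i j. Proof. by []. Qed.
Lemma chk_P4 : all (fun a0 => all (fun a1 => all (fun a2 => all (fun a3 => ~~ KTn 4 P4n (fun i => nth 0 [:: a0;a1;a2;a3] i)) [:: 0; 1; 2]) [:: 0; 1; 2]) [:: 0; 1; 2]) [:: 0; 1; 2].
Proof. by vm_compute. Qed.
Lemma noKT_P4 q : (forall i, q i < 3) -> ~~ KTn 4 P4n q.
Proof.
move=> hq; move/allP: chk_P4 => /(_ (q 0) (lt3_mem (hq 0))) /allP /(_ (q 1) (lt3_mem (hq 1))) /allP /(_ (q 2) (lt3_mem (hq 2))) /allP /(_ (q 3) (lt3_mem (hq 3))).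
rewrite (@KTn_ext _ _ _ q) //.
by move=> [|[|[|[|i]]]].
Qed.
Lemma chk_K5 : all (fun a0 => all (fun a1 => all (fun a2 => all (fun a3 => all (fun a4 => ~~ KTn 5 K5n (fun i => nth 0 [:: a0;a1;a2;a3;a4] i)) [:: 0; 1; 2]) [:: 0; 1; 2]) [:: 0; 1; 2]) [:: 0; 1; 2]) [:: 0; 1; 2].
Proof. by vm_compute. Qed.
Lemma noKT_K5 q : (forall i, q i < 3) -> ~~ KTn 5 K5n q.
Proof.
move=> hq; move/allP: chk_K5 => /(_ (q 0) (lt3_mem (hq 0))) /allP /(_ (q 1) (lt3_mem (hq 1))) /allP /(_ (q 2) (lt3_mem (hq 2))) /allP /(_ (q 3) (lt3_mem (hq 3))) /allP /(_ (q 4) (lt3_mem (hq 4))).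
rewrite (@KTn_ext _ _ _ q) //.
by move=> [|[|[|[|[|i]]]]].
Qed.
Lemma chk_F4 : all (fun a0 => all (fun a1 => all (fun a2 => all (fun a3 => all (fun a4 => ~~ KTn 5 F4n (fun i => nth 0 [:: a0;a1;a2;a3;a4] i)) [:: 0; 1; 2]) [:: 0; 1; 2]) [:: 0; 1; 2]) [:: 0; 1; 2]) [:: 0; 1; 2].
Proof. by vm_compute. Qed.
Lemma noKT_F4 q : (forall i, q i < 3) -> ~~ KTn 5 F4n q.
Proof.
move=> hq; move/allP: chk_F4 => /(_ (q 0) (lt3_mem (hq 0))) /allP /(_ (q 1) (lt3_mem (hq 1))) /allP /(_ (q 2) (lt3_mem (hq 2))) /allP /(_ (q 3) (lt3_mem (hq 3))) /allP /(_ (q 4) (lt3_mem (hq 4))).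
rewrite (@KTn_ext _ _ _ q) //.
by move=> [|[|[|[|[|i]]]]].
Qed.
Lemma chk_F5 : all (fun a0 => all (fun a1 => all (fun a2 => all (fun a3 => all (fun a4 => ~~ KTn 5 F5n (fun i => nth 0 [:: a0;a1;a2;a3;a4] i)) [:: 0; 1; 2]) [:: 0; 1; 2]) [:: 0; 1; 2]) [:: 0; 1; 2]) [:: 0; 1; 2].
Proof. by vm_compute. Qed.
Lemma noKT_F5 q : (forall i, q i < 3) -> ~~ KTn 5 F5n q.
Proof.
move=> hq; move/allP: chk_F5 => /(_ (q 0) (lt3_mem (hq 0))) /allP /(_ (q 1) (lt3_mem (hq 1))) /allP /(_ (q 2) (lt3_mem (hq 2))) /allP /(_ (q 3) (lt3_mem (hq 3))) /allP /(_ (q 4) (lt3_mem (hq 4))).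
rewrite (@KTn_ext _ _ _ q) //.
by move=> [|[|[|[|[|i]]]]].
Qed.
Lemma chk_K6 : all (fun a0 => all (fun a1 => all (fun a2 => all (fun a3 => all (fun a4 => all (fun a5 => ~~ KTn 6 K6n (fun i => nth 0 [:: a0;a1;a2;a3;a4;a5] i)) [:: 0; 1; 2]) [:: 0; 1; 2]) [:: 0; 1; 2]) [:: 0; 1; 2]) [:: 0; 1; 2]) [:: 0; 1; 2].
Proof. by vm_compute. Qed.
Lemma noKT_K6 q : (forall i, q i < 3) -> ~~ KTn 6 K6n q.
Proof.
move=> hq; move/allP: chk_K6 => /(_ (q 0) (lt3_mem (hq 0))) /allP /(_ (q 1) (lt3_mem (hq 1))) /allP /(_ (q 2) (lt3_mem (hq 2))) /allP /(_ (q 3) (lt3_mem (hq 3))) /allP /(_ (q 4) (lt3_mem (hq 4))) /allP /(_ (q 5) (lt3_mem (hq 5))).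
rewrite (@KTn_ext _ _ _ q) //.
by move=> [|[|[|[|[|[|i]]]]]].
Qed.

Lemma back_dir (T : finType) (e : rel T) :
  (exists m n o : nat, induced_sub e (Kmno m n o) \/ induced_sub e (Tjoin n m o)) -> F2_free e.
Proof.
move=> [m [n [o H]]].
split; first exact: (bridge hP4n noKT_P4 H).
split; first exact: (bridge hK5n noKT_K5 H).
split; first exact: (bridge hK6n noKT_K6 H).
split; first exact: (bridge hF4n noKT_F4 H).
exact: (bridge hF5n noKT_F5 H).
Qed.

Lemma emb_gen (T : finType) (R : rel T) k (F : rel 'I_k) (s : seq T) (x0 : T) :
  size s = k -> uniq s -> (forall i j : 'I_k, R (nth x0 s i) (nth x0 s j) = F i j) ->
  induced_sub F R.
Proof.
move=> hs hu hR; exists (fun i : 'I_k => nth x0 s i); split => // i j /eqP.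
by rewrite nth_uniq ?hs // => /eqP/val_inj.
Qed.

Ltac neqcl Rirr :=
  first [ done | (rewrite eq_sym; done)
        | (apply/eqP => Heq; subst; match goal with H : is_true (_ ?x ?x) |- _ => by rewrite Rirr in H end) ].
Ltac ecl Rsym :=
  first [ done | (apply/negbTE; done) | (rewrite Rsym; done) | (rewrite Rsym; apply/negbTE; done) ].

Ltac edgecl Rsym Rirr :=
  rewrite /= ?Rirr /P4 /K5_minus_S2 /K6_minus_M2 /F2_4 /F2_5 /in_edges /=; ecl Rsym.
Ltac embed s Rsym Rirr :=
  let x0 := match s with ?a :: _ => a end in
  refine (@emb_gen _ _ _ _ s x0 _ _ _); [ done
  | rewrite /= ?inE ?negb_or; repeat (apply/andP; split); neqcl Rirr
  | first [ (move=> [[|[|[|[|i]]]] Hi] [[|[|[|[|j]]]] Hj] //; edgecl Rsym Rirr)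
          | (move=> [[|[|[|[|[|i]]]]] Hi] [[|[|[|[|[|j]]]]] Hj] //; edgecl Rsym Rirr)
          | (move=> [[|[|[|[|[|[|i]]]]]] Hi] [[|[|[|[|[|[|j]]]]]] Hj] //; edgecl Rsym Rirr) ] ].

Section Graph.
Variables (T : finType).

Definition compl (R : rel T) : rel T := fun x y => (x != y) && ~~ R x y.

Lemma compl_sym R : symmetric R -> symmetric (compl R).
Proof. by move=> hs x y; rewrite /compl eq_sym hs. Qed.
Lemma compl_irr R : irreflexive (compl R).
Proof. by move=> x; rewrite /compl eqxx. Qed.

Lemma P4_compl R : symmetric R -> irreflexive R -> ~ induced_sub P4 R -> ~ induced_sub P4 (compl R).
Proof.
move=> hs hi hP [g [ginj gE]]; apply: hP.
have hf : forall i j, i != j -> R (g i) (g j) = ~~ P4 i j.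
  by move=> i j ij; rewrite -gE /compl (inj_eq ginj) ij negbK.
pose o0 := @Ordinal 4 0 isT. pose o1 := @Ordinal 4 1 isT.
pose o2 := @Ordinal 4 2 isT. pose o3 := @Ordinal 4 3 isT.
apply: (@emb_gen _ _ _ _ [:: g o2; g o0; g o3; g o1] (g o0)) => //.
  by rewrite /= !inE !(inj_eq ginj).
move=> [[|[|[|[|i]]]] Hi] [[|[|[|[|j]]]] Hj] //=; rewrite ?hi ?hf //.
Qed.
End Graph.

Section Seinsche.
Variables (T : finType).

Definition splitR (R : rel T) (S : {set T}) := exists A : {set T},
  [/\ A \subset S, A != set0, S :\: A != set0 &
      forall x y, x \in A -> y \in S :\: A -> ~~ R x y].

Lemma core R (Rsym : symmetric R) (Rirr : irreflexive R) (hP : ~ induced_sub P4 R)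
  (S' A : {set T}) v u z :
  A \subset S' -> (forall x y, x \in A -> y \in S' :\: A -> ~~ R x y) ->
  v \notin S' -> u \in A -> ~~ R v u -> z \in S' :\: A -> R v z -> splitR R (v |: S').
Proof.
move=> AS cross vS uA Rvu zB Rvz.
pose X := [set y in A | ~~ R v y].
case: (boolP [exists x in A, exists y in X, (x \notin X) && R x y]).
  move/existsP=> [x /andP[xA /existsP[y /andP[yX /andP[xnX Rxy]]]]].
  exfalso; apply: hP.
  move: yX xnX; rewrite !inE xA /= negbK => /andP[yA Rvy] Rvx.
  have Ryz := cross _ _ yA zB. have Rxz := cross _ _ xA zB.
  have yv : y != v by apply: contraNneq vS => <-; apply: (subsetP AS).
  have yz : y != z by apply: contraTneq zB => <-; rewrite inE yA.
  have xz : x != z by apply: contraTneq zB => <-; rewrite inE xA.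
  embed [:: y; x; v; z] Rsym Rirr.
move=> hno; exists X; split.
- apply: subset_trans (subsetUr _ _); apply/subsetP => y; rewrite inE => /andP[/(subsetP AS) //].
- by apply/set0Pn; exists u; rewrite inE uA.
- apply/set0Pn; exists v; rewrite !inE eqxx /= andbT.
  by apply: contraNN vS => /andP[/(subsetP AS)].
move=> x y; rewrite inE => /andP[xA Rvx]; rewrite !inE => /andP[ynX /orP[/eqP->|yS]].
  by rewrite Rsym.
case yA: (y \in A).
  move: ynX; rewrite yA /= negbK => Rvy.
  apply: contraNN hno => Rxy; apply/existsP; exists y; rewrite yA /=.
  by apply/existsP; exists x; rewrite !inE xA Rvx yA Rvy /= Rsym.
by apply: cross => //; rewrite inE yA yS.
Qed.

Lemma step R (Rsym : symmetric R) (Rirr : irreflexive R) (hP : ~ induced_sub P4 R)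
  (S' : {set T}) v u :
  v \notin S' -> u \in S' -> ~~ R v u -> splitR R S' -> splitR R (v |: S').
Proof.
move=> vS uS Rvu [A0 [AS0 An0 Bn0 cross0]].
have gen : forall A : {set T}, A \subset S' -> A != set0 -> S' :\: A != set0 ->
    (forall x y, x \in A -> y \in S' :\: A -> ~~ R x y) -> u \in A -> splitR R (v |: S').
  move=> A AS An Bn cross uA.
  case: (boolP [exists z in S' :\: A, R v z]).
    by move/existsP=> [z /andP[zB Rvz]]; apply: (core Rsym Rirr hP AS cross vS uA Rvu zB Rvz).
  move=> hno; exists (S' :\: A); split => //.
  - exact: subset_trans (subsetDl _ _) (subsetUr _ _).
  - by apply/set0Pn; exists v; rewrite !inE eqxx /= andbT; apply: contraNN vS => /andP[].
  move=> x y xB; rewrite !inE => /andP[yn /orP[/eqP->|yS]].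
    apply: contraNN hno => Rxv; apply/existsP; exists x; by rewrite xB Rsym.
  move: yn; rewrite yS andbT negbK => yA; rewrite Rsym; apply: cross => //.
case uA: (u \in A0); first exact: gen uA.
apply: (gen (S' :\: A0)) => //.
- exact: subsetDl.
- by rewrite setDDr setDv set0U (setIidPr AS0).
- move=> x y xB; rewrite setDDr setDv set0U (setIidPr AS0) => yA.
  by rewrite Rsym; apply: cross0.
by rewrite inE uA.
Qed.

Lemma seinsche R (Rsym : symmetric R) (Rirr : irreflexive R) (hP : ~ induced_sub P4 R) :
  forall S : {set T}, 1 < #|S| -> splitR R S \/ splitR (compl R) S.
Proof.
have hPc := P4_compl Rsym Rirr hP.
have hPcc := P4_compl (compl_sym Rsym) (@compl_irr _ R) hPc.
move=> S; have [n] := ubnP #|S|; elim: n S => // n IH S ltn h1.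
have [v vS] : exists v, v \in S.
  by apply/set0Pn; rewrite -card_gt0; apply: ltn_trans h1.
pose S' := S :\ v.
have eS : S = v |: S' by rewrite setD1K.
have vnS : v \notin S' by rewrite !inE eqxx.
have cS : #|S| = #|S'|.+1 by rewrite (cardsD1 v S) vS.
case: (boolP [forall y in S', ~~ R v y]) => [/forall_inP hall | /forall_inP hex].
  left; exists S'; split.
  - exact: subsetDl.
  - by rewrite -card_gt0 -ltnS -cS.
  - by apply/set0Pn; exists v; rewrite !inE eqxx vS.
  move=> x y xS; rewrite !inE; case: (eqVneq y v) => [-> _|yv]; last by rewrite /= andNb.
  by rewrite Rsym; apply: hall.
have [u uS Rvu] : exists2 u, u \in S' & R v u.
  case: (boolP [exists u in S', R v u]) => [/exists_inP //|/exists_inP hn].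
  case: hex => x xS; apply/negP => Rx; apply: hn; by exists x.
case: (boolP [forall y in S', R v y]) => [/forall_inP hall' | /forall_inP hex'].
  right; exists [set v]; split.
  - by rewrite sub1set.
  - by apply/set0Pn; exists v; rewrite inE.
  - have uv : u != v by apply: contraNneq vnS => <-.
    have uS0 : u \in S by move: uS; rewrite !inE => /andP[].
    by apply/set0Pn; exists u; rewrite !inE uv uS0.
  move=> x y; rewrite inE => /eqP->; rewrite !inE => /andP[yv yS].
  by rewrite /compl negb_and negbK hall' ?orbT // !inE yv yS.
have [w wS Rvw] : exists2 w, w \in S' & ~~ R v w.
  case: (boolP [exists u in S', ~~ R v u]) => [/exists_inP //|/exists_inP hn].
  case: hex' => x xS; apply/negPn/negP => Rx; apply: hn; by exists x.
have h1' : 1 < #|S'|.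
  have wu : w != u by apply: contraNneq Rvw => ->.
  rewrite (cardsD1 u) uS ltnS card_gt0; apply/set0Pn; exists w.
  by rewrite in_setD1 wu wS.
have := IH S' _ h1'; rewrite -cS => /(_ ltn) [sp|sp]; rewrite eS.
  by left; apply: (step Rsym Rirr hP vnS wS Rvw sp).
right; apply: (step (compl_sym Rsym) (@compl_irr _ R) hPc vnS uS _ sp).
by rewrite /compl negb_and negbK Rvu orbT.
Qed.
End Seinsche.

Section Build.
Variables (T : finType) (e : rel T).

Definition emb3 (p : T -> nat) (x : T) : 'I_#|T| + ('I_#|T| + 'I_#|T|) :=
  if p x == 0 then inl (enum_rank x)
  else if p x == 1 then inr (inl (enum_rank x)) else inr (inr (enum_rank x)).

Lemma part3_emb3 p x : p x < 3 -> part3 (emb3 p x) = p x.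
Proof. by rewrite /emb3; case: (p x) => [|[|[|]]]. Qed.

Lemma emb3_inj p : injective (emb3 p).
Proof.
move=> x y /(congr1 (fun z : 'I_#|T| + ('I_#|T| + 'I_#|T|) =>
   match z with inl a => a | inr (inl a) => a | inr (inr a) => a end)).
by rewrite /emb3; repeat (case: ifP => _); move/enum_rank_inj.
Qed.

Lemma mkK (p : T -> nat) : (forall x, p x < 3) -> (forall x y, e x y = (p x != p y)) ->
  exists m n o : nat, induced_sub e (Kmno m n o) \/ induced_sub e (Tjoin n m o).
Proof.
move=> hp he; exists #|T|, #|T|, #|T|; left; exists (emb3 p); split; first exact: emb3_inj.
by move=> x y; rewrite /Kmno !part3_emb3.
Qed.

Lemma mkT (p : T -> nat) : (forall x, p x < 3) ->
  (forall x y, e x y = (x != y) && (if (p x == 0) || (p y == 0) then p x != p y else p x == p y)) ->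
  exists m n o : nat, induced_sub e (Kmno m n o) \/ induced_sub e (Tjoin n m o).
Proof.
move=> hp he; exists #|T|, #|T|, #|T|; right; exists (emb3 p); split; first exact: emb3_inj.
by move=> x y; rewrite /Tjoin !part3_emb3 // (inj_eq (@emb3_inj p)).
Qed.
End Build.

Section Main.
Variables (T : finType) (e : rel T).
Hypotheses (esym : symmetric e) (eirr : irreflexive e).
Hypotheses (hP4 : ~ induced_sub P4 e) (hK5 : ~ induced_sub K5_minus_S2 e)
  (hK6 : ~ induced_sub K6_minus_M2 e) (hF4 : ~ induced_sub F2_4 e) (hF5 : ~ induced_sub F2_5 e).

Lemma case1 (ntrans : forall x y z, ~~ e x y -> ~~ e y z -> ~~ e x z) :
  exists m n o : nat, induced_sub e (Kmno m n o) \/ induced_sub e (Tjoin n m o).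
Proof.
have ntr_e : forall a b c, ~~ e a b -> e b c -> e a c.
  move=> a b c nab ebc; apply/negPn/negP => nac.
  have nba : ~~ e b a by rewrite esym.
  by move: (ntrans _ _ _ nba nac); rewrite ebc.
pose big x := [exists y, (y != x) && ~~ e x y].
case: (boolP [exists x, exists y, [&& big x, big y & e x y]]).
  move/existsP => [x /existsP [y /and3P [bx bY exy]]].
  move/existsP: bx => [x' /andP [x'x nxx']]. move/existsP: bY => [y' /andP[y'y nyy']].
  have key : forall u v, e u x -> e u y -> e v x -> e v y -> ~~ e u v.
    move=> u v ux uy vx vy; apply/negP => uv; apply: hK6.
    have nx'x : ~~ e x' x by rewrite esym.
    have ny'y : ~~ e y' y by rewrite esym.
    have h1 : e x' y := ntr_e _ _ _ nx'x exy.
    have h2 : e x y' by rewrite esym; apply: (ntr_e _ _ _ ny'y); rewrite esym.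
    have h3 : e x' y' := ntr_e _ _ _ nx'x h2.
    have h4 : e u x' by rewrite esym; apply: (ntr_e _ _ _ nx'x); rewrite esym.
    have h5 : e u y' by rewrite esym; apply: (ntr_e _ _ _ ny'y); rewrite esym.
    have h6 : e v x' by rewrite esym; apply: (ntr_e _ _ _ nx'x); rewrite esym.
    have h7 : e v y' by rewrite esym; apply: (ntr_e _ _ _ ny'y); rewrite esym.
    embed [:: x; x'; y; y'; u; v] esym eirr.
  pose p w := if ~~ e w x then 0 else if ~~ e w y then 1 else 2.
  apply: (@mkK _ _ p); first by move=> w; rewrite /p; case: ifP => _ //; case: ifP.
  move=> u v; rewrite /p.
  case: (boolP (e u x)) => hux; case: (boolP (e u y)) => huy;
    case: (boolP (e v x)) => hvx; case: (boolP (e v y)) => hvy => /=.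
  all: try first [
    (apply/negbTE; apply: (ntrans _ x); [ done | by rewrite esym ])
  | (apply/negbTE; apply: (ntrans _ y); [ done | by rewrite esym ])
  | (apply/negbTE; apply: key; done)
  | (apply: (ntr_e _ x); [done | by rewrite esym])
  | (apply: (ntr_e _ y); [done | by rewrite esym])
  | (rewrite esym; apply: (ntr_e _ x); [done | by rewrite esym])
  | (rewrite esym; apply: (ntr_e _ y); [done | by rewrite esym]) ].
move=> hno.
apply: (@mkT _ _ (fun w => if big w then 0 else 1)); first by move=> w; case: ifP.
move=> u v; case: (eqVneq u v) => [->|uv]; first by rewrite eirr.
rewrite /=; case: (boolP (big u)) => bu; case: (boolP (big v)) => bv /=.
- apply/negbTE/negP => euv; move/negP: hno; apply; apply/existsP; exists u;
    apply/existsP; exists v; by rewrite bu bv euv.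
- by move/existsPn: bv => /(_ u); rewrite uv /= negbK esym.
- by move/existsPn: bu => /(_ v); rewrite eq_sym uv /= negbK.
- by move/existsPn: bu => /(_ v); rewrite eq_sym uv /= negbK.
Qed.
End Main.

Section Case2.
Variables (T : finType) (e : rel T).
Hypotheses (esym : symmetric e) (eirr : irreflexive e).
Hypotheses (hP4 : ~ induced_sub P4 e) (hK5 : ~ induced_sub K5_minus_S2 e)
  (hF4 : ~ induced_sub F2_4 e) (hF5 : ~ induced_sub F2_5 e).
Variables (A : {set T}) (be a b c : T).
Hypotheses (beA : be \notin A) (cross : forall x y, x \in A -> y \notin A -> e x y).
Hypotheses (aA : a \in A) (bA : b \in A) (cA : c \in A).
Hypotheses (ab : a != b) (bc : b != c) (nab : ~~ e a b) (nbc : ~~ e b c) (eac : e a c).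

Definition Nr x y := (x != y) && ~~ e x y.
Definition tri x y z := [/\ Nr x y, Nr y z & Nr x z].

Lemma Nsym x y : Nr x y = Nr y x.
Proof. by rewrite /Nr eq_sym esym. Qed.

Lemma inA_N x y : x \in A -> ~~ e x y -> y \in A.
Proof. by move=> xA nxy; apply: contraNT nxy => yA; apply: cross. Qed.

Lemma ebe x : x \in A -> e x be.
Proof. by move=> xA; apply: cross. Qed.

Lemma L_K5 p q r y z : p != q -> q != r -> ~~ e p q -> ~~ e q r -> e p r ->
  e y p -> e y q -> e y r -> e z p -> e z q -> e z r -> e y z -> False.
Proof.
move=> pq qr npq nqr epr eyp eyq eyr ezp ezq ezr eyz; apply: hK5.
embed [:: p; q; r; y; z] esym eirr.
Qed.

Lemma L_paw v x y z : x \in A -> tri x y z -> Nr v x -> e v y -> e v z -> False.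
Proof.
move=> xA [/andP[xy nxy] /andP[yz nyz] /andP[xz nxz]] /andP[vx nvx] evy evz.
have yA := inA_N xA nxy. have zA := inA_N xA nxz.
have vA : v \in A by apply: (inA_N xA); rewrite esym.
have h1 := ebe xA. have h2 := ebe yA. have h3 := ebe zA. have h4 := ebe vA.
apply: hF5; embed [:: y; v; z; be; x] esym eirr.
Qed.

Lemma L_dia v x y z : x \in A -> tri x y z -> Nr v x -> Nr v y -> e v z -> False.
Proof.
move=> xA [/andP[xy nxy] /andP[yz nyz] /andP[xz nxz]] /andP[vx nvx] /andP[vy nvy] evz.
have yA := inA_N xA nxy. have zA := inA_N xA nxz.
have vA : v \in A by apply: (inA_N xA); rewrite esym.
have h1 := ebe xA. have h2 := ebe yA. have h3 := ebe zA. have h4 := ebe vA.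
apply: hF4; embed [:: x; v; z; be; y] esym eirr.
Qed.

Lemma tri_prop x y z v : x \in A -> tri x y z -> Nr v x -> v != y -> v != z -> Nr v y.
Proof.
move=> xA t vx vy vz; rewrite /Nr vy /=; apply/negP => evy.
case: (boolP (e v z)) => evz; first exact: (L_paw xA t vx evy evz).
have [t1 t2 t3] := t.
apply: (@L_dia v x z y xA _ vx _ evy).
  by split => //; rewrite Nsym.
by rewrite /Nr vz.
Qed.

Lemma tri_grow x y z v : x \in A -> tri x y z -> Nr v x -> exists s, tri v x s.
Proof.
move=> xA t vx; have [t1 t2 t3] := t.
case: (eqVneq v y) => [->|vy]; first by exists z; split => //; rewrite Nsym.
case: (eqVneq v z) => [->|vz]; first by exists y; split => //; rewrite Nsym.
by exists y; split => //; apply: (tri_prop xA t).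
Qed.

Lemma triA x y z : tri x y z -> x \in A -> y \in A.
Proof. by move=> [/andP[_ h] _ _] xA; apply: inA_N xA h. Qed.

Lemma Nab : Nr a b. Proof. by rewrite /Nr ab. Qed.
Lemma Nbc : Nr b c. Proof. by rewrite /Nr bc. Qed.
Lemma ac : a != c. Proof. by apply: contraTneq eac => ->; rewrite eirr. Qed.

Lemma tri_b q r : tri b q r -> False.
Proof.
move=> t; have [s ts] := tri_grow bA t (Nab).
have [s1 s2 s3] := ts.
have tb : tri b a s by split => //; rewrite Nsym.
case: (eqVneq c a) => [ca|ca]; first by move: ac; rewrite ca eqxx.
case: (eqVneq c s) => [cs|cs].
  by move: s3; rewrite -cs /Nr eac andbF.
have := tri_prop bA tb _ ca cs; rewrite Nsym Nbc => /(_ isT).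
by rewrite /Nr esym eac andbF.
Qed.

Lemma tri_a q r : tri a q r -> False.
Proof.
move=> t; have hba : Nr b a by rewrite Nsym Nab.
have [s ts] := tri_grow aA t hba.
exact: tri_b ts.
Qed.

Lemma tri_c q r : tri c q r -> False.
Proof.
move=> t; have [s ts] := tri_grow cA t Nbc.
exact: tri_b ts.
Qed.

Lemma touch x y z w : x \in A -> tri x y z -> (w == x) || (w == y) || (w == z) || Nr w x ->
  exists q r, tri w q r.
Proof.
move=> xA t; have [t1 t2 t3] := t.
move=> /orP[/orP[/orP[/eqP->|/eqP->]|/eqP->]|wx].
- by exists y, z.
- by exists x, z; split => //; rewrite Nsym.
- by exists x, y; split => //; rewrite Nsym.
have [s ts] := tri_grow xA t wx; by exists x, s.
Qed.

Lemma notouch x w : ~~ ((w == x) || Nr w x) -> e x w.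
Proof.
rewrite negb_or /Nr => /andP[wx]; rewrite wx /= negbK esym //.
Qed.

Lemma tri_free x y z : x \in A -> tri x y z -> False.
Proof.
move=> xA t.
case: (boolP ((a == x) || (a == y) || (a == z) || Nr a x)) => [/(touch xA t)[q [r /tri_a]] //|ha].
case: (boolP ((b == x) || (b == y) || (b == z) || Nr b x)) => [/(touch xA t)[q [r /tri_b]] //|hb].
case: (boolP ((c == x) || (c == y) || (c == z) || Nr c x)) => [/(touch xA t)[q [r /tri_c]] //|hc].
have xa : e x a by apply: notouch; apply: contra ha => /orP[->|->]; rewrite ?orbT.
have xb : e x b by apply: notouch; apply: contra hb => /orP[->|->]; rewrite ?orbT.
have xc : e x c by apply: notouch; apply: contra hc => /orP[->|->]; rewrite ?orbT.
apply: (L_K5 ab bc nab nbc eac xa xb xc _ _ _ (ebe xA)).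
- by rewrite esym ebe.
- by rewrite esym ebe.
- by rewrite esym ebe.
Qed.

Lemma cl_i x y : x \in A -> Nr x b -> Nr y b -> x != y -> e x y.
Proof.
move=> xA xb yb xy; apply/negPn/negP => nxy.
apply: (@tri_free x y b xA); split => //; by rewrite /Nr xy.
Qed.

Lemma side3 x y w : x \in A -> Nr w b -> Nr y w -> e x y -> Nr x b -> e y b -> False.
Proof.
move=> xA wb yw exy xb eyb.
have xw : x != w by apply: contraTneq exy => ->; move: yw; rewrite /Nr esym => /andP[].
have exw : e x w.
  apply/negPn/negP => nxw; apply: (@tri_free x w b xA); split => //; by rewrite /Nr xw.
case/andP: wb => wb nwb. case/andP: yw => yw nyw. case/andP: xb => xb nxb.
apply: hP4; embed [:: b; y; x; w] esym eirr.
Qed.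

Lemma cl_iii x y : x \in A -> y \in A -> Nr x b -> ~~ Nr y b -> ~~ e x y.
Proof.
move=> xA yA xb yb; apply/negP => exy.
have yb' : y != b by apply: contraTneq exy => ->; case/andP: xb.
have eyb : e y b by move: yb; rewrite /Nr yb' /= negbK.
have ya : y != a by apply: contraNneq yb => ->; exact: Nab.
have yc : y != c by apply: contraNneq yb => ->; rewrite Nsym; exact: Nbc.
case: (boolP (Nr y a)) => hya.
  by apply: (side3 xA _ hya exy xb eyb); exact: Nab.
case: (boolP (Nr y c)) => hyc.
  by apply: (side3 xA _ hyc exy xb eyb); rewrite Nsym; exact: Nbc.
have eya : e y a by move: hya; rewrite /Nr ya /= negbK.
have eyc : e y c by move: hyc; rewrite /Nr yc /= negbK.
apply: (L_K5 ab bc nab nbc eac eya eyb eyc _ _ _ (ebe yA)); by rewrite esym ebe.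
Qed.

Lemma side2 x y w : x \in A -> Nr x w -> Nr w b -> Nr x y -> e x b -> e y b -> ~~ Nr y b -> False.
Proof.
move=> xA xw wb xy exb eyb yb.
have yw : y != w by apply: contraNneq yb => ->.
have eyw : e y w.
  apply/negPn/negP => nyw; apply: (@tri_free x y w xA); split => //; by rewrite /Nr yw.
case/andP: wb => wb nwb. case/andP: xw => xw nxw. case/andP: xy => xy nxy.
apply: hP4; embed [:: w; y; b; x] esym eirr.
Qed.

Lemma cl_ii x y : x \in A -> y \in A -> ~~ Nr x b -> ~~ Nr y b -> x != y -> e x y.
Proof.
move=> xA yA xb yb xy; apply/negPn/negP => nxy.
have Nxy : Nr x y by rewrite /Nr xy.
have xb' : x != b by apply: contraNneq yb => xb'; rewrite -xb' Nsym.
have exb : e x b by move: xb; rewrite /Nr xb' /= negbK.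
have yb' : y != b by apply: contraNneq xb => yb'; rewrite -yb'.
have eyb : e y b by move: yb; rewrite /Nr yb' /= negbK.
have xa : x != a by apply: contraNneq xb => ->; exact: Nab.
have xc : x != c by apply: contraNneq xb => ->; rewrite Nsym; exact: Nbc.
case: (boolP (Nr x a)) => hxa.
  by apply: (side2 xA hxa _ Nxy exb eyb yb); exact: Nab.
case: (boolP (Nr x c)) => hxc.
  by apply: (side2 xA hxc _ Nxy exb eyb yb); rewrite Nsym; exact: Nbc.
have exa : e x a by move: hxa; rewrite /Nr xa /= negbK.
have exc : e x c by move: hxc; rewrite /Nr xc /= negbK.
apply: (L_K5 ab bc nab nbc eac exa exb exc _ _ _ (ebe xA)); by rewrite esym ebe.
Qed.

Lemma cl_1 x y : x \notin A -> y \notin A -> ~~ e x y.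
Proof.
move=> xA yA; apply/negP => exy.
apply: (L_K5 ab bc nab nbc eac _ _ _ _ _ _ exy); by rewrite esym cross.
Qed.

Lemma case2_build : exists m n o : nat, induced_sub e (Kmno m n o) \/ induced_sub e (Tjoin n m o).
Proof.
apply: (@mkT _ _ (fun z => if z \in A then (if Nr z b then 2 else 1) else 0)).
  by move=> z; repeat case: ifP.
move=> u v; case: (eqVneq u v) => [->|uv]; first by rewrite eirr.
rewrite /=; case uA: (u \in A); case vA: (v \in A);
  case: (boolP (Nr u b)) => ub; case: (boolP (Nr v b)) => vb /=.
all: try (by apply: cl_i).
all: try (by apply/negbTE; apply: cl_iii).
all: try (by apply/negbTE; rewrite esym; apply: cl_iii).
all: try (by apply: cl_ii).
all: try (by apply: cross; rewrite ?uA ?vA).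
all: try (by rewrite esym; apply: cross; rewrite ?uA ?vA).
all: try (by apply/negbTE; apply: cl_1; rewrite ?uA ?vA).
Qed.

End Case2.

Theorem theorem4p3 (T : finType) (e : rel T) :
  symmetric e -> irreflexive e -> connected_graph e ->
  (F2_free e <->
   exists m n o : nat, induced_sub e (Kmno m n o) \/ induced_sub e (Tjoin n m o)).
Proof.
move=> esym eirr hconn; split; last exact: back_dir.
move=> [hP4 [hK5 [hK6 [hF4 hF5]]]].
case: (boolP [exists a, exists b, exists c, [&& ~~ e a b, ~~ e b c & e a c]]); last first.
  move=> hno; apply: (case1 esym eirr hK6) => x y z nxy nyz; apply/negP => exz.
  move/negP: hno; apply; apply/existsP; exists x; apply/existsP; exists y; apply/existsP; exists z.
  by rewrite nxy nyz exz.
move/existsP => [a /existsP[b /existsP[c /and3P[nab nbc eac]]]].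
have ab : a != b by apply: contraTneq eac => ->.
have bc : b != c by apply: contraTneq eac => <-.
have key : forall (A : {set T}) be, be \notin A -> (forall x y, x \in A -> y \notin A -> e x y) ->
    b \in A -> exists m n o : nat, induced_sub e (Kmno m n o) \/ induced_sub e (Tjoin n m o).
  move=> A be beA cr bA.
  have aA : a \in A by apply: contraTT nab => aA; rewrite esym cr.
  have cA : c \in A by apply: contraTT nbc => cA; rewrite cr.
  exact: (case2_build esym eirr hP4 hK5 hF4 hF5 beA cr aA bA cA ab bc nab nbc eac).
have h1 : 1 < #|[set: T]|.
  apply: (@leq_trans #|[set a; b]|); first by rewrite cards2 ab.
  by apply: subset_leq_card; apply/subsetP => z; rewrite inE.
case: (seinsche esym eirr hP4 h1) => [[A [_ An Bn cr]] | [A [_ An Bn cr]]].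
  exfalso.
  have [x xA] := set0Pn _ An. have [y yB] := set0Pn _ Bn.
  have cl : closed e (mem A).
    move=> u w euw; case uA: (u \in A); case wA: (w \in A) => //.
      by have := cr u w uA; rewrite !inE wA euw => /(_ isT).
    by have := cr w u wA; rewrite !inE uA esym euw => /(_ isT).
  move: (closed_connect cl (hconn x y)) => /=; rewrite xA => yA.
  by move: yB; rewrite !inE -yA.
have cr' : forall x y, x \in A -> y \notin A -> e x y.
  move=> x y xA yA; have := cr x y xA; rewrite !inE yA /compl negb_and negbK => /(_ isT).
  have /negbTE-> : x != y by apply: contraNneq yA => <-.
  by rewrite /= negbK.
case bA: (b \in A).
  have [be beB] := set0Pn _ Bn.
  by apply: (key A be) => //; move: beB; rewrite !inE => /andP[].
have [be beA] := set0Pn _ An.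
apply: (key (~: A) be).
- by rewrite inE negbK.
- by move=> x y; rewrite !inE negbK => xA yA; rewrite esym; apply: cr'.
- by rewrite inE bA.
Qed.
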